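(* Let $\mathcal{L}$ be the set of formulas of classical propositional calculus (with $\neg$ and $\wedge$ as basic connectives and the other connectives defined classically), and let $a, b \in \mathcal{L}$. The following are equivalent: (1) $a$ logically implies $b$ in classical propositional logic, $a \models b$; (2) for every operation $\mathcal{C}: 2^{\mathcal{L}}\to 2^{\mathcal{L}}$ satisfying Inclusion, Idempotence, Monotonicity, Weak Compactness, $\wedge$-R, $\neg$-R1 and $\neg$-R2, one has $b \in \mathcal{C}(\{a\})$; (3) for every operation $\mathcal{C}: 2^{\mathcal{L}}\to 2^{\mathcal{L}}$ satisfying Inclusion, Cumulativity, Weak Compactness, $\wedge$-R, $\neg$-R1 and $\neg$-R2, one has $b \in \mathcal{C}(\{a\})$; (4) for every operation $\mathcal{C}$ as in (3) and every $A \subseteq \mathcal{L}$, one has $b \in \mathcal{C}(A \cup\{a\})$; (5) for every operation $\mathcal{C}$ as in (3), one has $\mathcal{C}(\{a, \neg b\}) = \mathcal{L}$.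
   Context: Write $\mathcal{C}(A, a_1,\dots,a_k)$ for $\mathcal{C}(A\cup\{a_1,\dots,a_k\})$. Properties, for all $A,B\subseteq\mathcal{L}$, $a,b\in\mathcal{L}$: Inclusion: $A \subseteq \mathcal{C}(A)$. Idempotence: $\mathcal{C}(\mathcal{C}(A)) = \mathcal{C}(A)$. Monotonicity: $A \subseteq B \Rightarrow \mathcal{C}(A)\subseteq\mathcal{C}(B)$. Cumulativity: $A \subseteq B \subseteq \mathcal{C}(A) \Rightarrow \mathcal{C}(A)=\mathcal{C}(B)$. Weak Compactness: if $\mathcal{C}(A)=\mathcal{L}$ then $\mathcal{C}(B)=\mathcal{L}$ for some finite $B\subseteq A$. $\wedge$-R: $\mathcal{C}(A, a\wedge b) = \mathcal{C}(A,a,b)$. $\neg$-R1: $\mathcal{C}(A,a,\neg a)=\mathcal{L}$. $\neg$-R2: if $\mathcal{C}(A,\neg a)=\mathcal{L}$ then $a\in\mathcal{C}(A)$. *)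

(* Defs.v *)
From Stdlib Require Import List.

Inductive form : Type :=
| Var : nat -> form
| Neg : form -> form
| And : form -> form -> form.

Fixpoint eval (v : nat -> bool) (f : form) : bool :=
  match f with
  | Var n => v n
  | Neg g => negb (eval v g)
  | And g h => andb (eval v g) (eval v h)
  end.

Definition entails (a b : form) : Prop :=
  forall v : nat -> bool, eval v a = true -> eval v b = true.

Definition fset := form -> Prop.
Definition fullset : fset := fun _ => True.
Definition subset (A B : fset) : Prop := forall x, A x -> B x.
Definition union (A B : fset) : fset := fun x => A x \/ B x.
Definition sing (a : form) : fset := fun x => x = a.
Definition pair (a b : form) : fset := fun x => x = a \/ x = b.
Definition add1 (A : fset) (a : form) : fset := union A (sing a).
Definition add2 (A : fset) (a b : form) : fset := union A (pair a b).
Definition finite (B : fset) : Prop := exists l : list form, forall x, B x <-> In x l.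

Definition Operation := fset -> fset.

Definition Inclusion (C : Operation) : Prop := forall A, subset A (C A).
Definition Idempotence (C : Operation) : Prop := forall A, C (C A) = C A.
Definition Monotonicity (C : Operation) : Prop :=
  forall A B, subset A B -> subset (C A) (C B).
Definition Cumulativity (C : Operation) : Prop :=
  forall A B, subset A B -> subset B (C A) -> C A = C B.
Definition WeakCompactness (C : Operation) : Prop :=
  forall A, C A = fullset -> exists B, finite B /\ subset B A /\ C B = fullset.
Definition AndR (C : Operation) : Prop :=
  forall A a b, C (add1 A (And a b)) = C (add2 A a b).
Definition NegR1 (C : Operation) : Prop :=
  forall A a, C (add2 A a (Neg a)) = fullset.
Definition NegR2 (C : Operation) : Prop :=
  forall A a, C (add1 A (Neg a)) = fullset -> C A a.

Definition classI (C : Operation) : Prop :=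
  Inclusion C /\ Idempotence C /\ Monotonicity C /\ WeakCompactness C /\
  AndR C /\ NegR1 C /\ NegR2 C.
Definition classII (C : Operation) : Prop :=
  Inclusion C /\ Cumulativity C /\ WeakCompactness C /\
  AndR C /\ NegR1 C /\ NegR2 C.

(* Main.v *)
Require Import Defs.
From Stdlib Require Import List Lia Classical FunctionalExtensionality PropExtensionality.
Import ListNotations.

Lemma fset_ext (A B : fset) : (forall x, A x <-> B x) -> A = B.
Proof. intros H. apply functional_extensionality; intros x. apply propositional_extensionality. apply H. Qed.

Lemma ceq C : classII C -> forall A B, (forall x, A x <-> B x) -> C A = C B.
Proof.
  intros (Hinc & Hcum & _) A B H. apply Hcum.
  - intros x Hx; apply H, Hx.
  - intros x Hx. apply Hinc. apply H, Hx.
Qed.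

Lemma mono_full C : classII C -> forall A B, subset A B -> C A = fullset -> C B = fullset.
Proof.
  intros (Hinc & Hcum & _) A B HAB HA. rewrite <- HA. symmetry. apply Hcum; auto.
  rewrite HA. intros x _. exact I.
Qed.

Lemma cut_full C : classII C -> forall A x, C A x -> C (add1 A x) = fullset -> C A = fullset.
Proof.
  intros (Hinc & Hcum & _) A x Hx H. rewrite <- H. apply Hcum.
  - intros y Hy; left; exact Hy.
  - intros y [Hy | Hy]. apply Hinc, Hy. unfold sing in Hy; subst; exact Hx.
Qed.

Fixpoint fsize (f : form) : nat :=
  match f with Var _ => 1 | Neg g => S (fsize g) | And g h => S (fsize g + fsize h) end.
Fixpoint msum (l : list form) : nat :=
  match l with [] => 0 | f :: l => fsize f + msum l end.
Lemma msum_app l1 l2 : msum (l1 ++ l2) = msum l1 + msum l2.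
Proof. induction l1; simpl; lia. Qed.

Definition sat (v : nat -> bool) (l : list form) := forall f, In f l -> eval v f = true.
Definition unsat l := forall v, ~ sat v l.

Definition nonlit (f : form) : Prop :=
  match f with Var _ => False | Neg (Var _) => False | _ => True end.

Lemma form_eq_dec : forall f g : form, {f = g} + {f <> g}.
Proof. decide equality; apply PeanoNat.Nat.eq_dec. Qed.

Ltac seteq := intros ?z; unfold add1, add2, union, sing, pair; split; intros ?H;
  repeat match goal with H: _ \/ _ |- _ => destruct H end; subst; tauto.

Lemma main C : classII C -> forall n l, msum l < n -> unsat l ->
  forall S, (forall x, In x l -> S x) -> C S = fullset.
Proof.
  intros HC. pose proof HC as (Hinc & Hcum & Hwc & Hand & Hn1 & Hn2).
  induction n as [|n IH]; intros l Hlt Hu S HS; [lia|].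
  destruct (classic (exists f, In f l /\ nonlit f)) as [[f [Hf Hnl]] | Hno].
  - destruct (in_split _ _ Hf) as (l1 & l2 & ->).
    rewrite msum_app in Hlt; simpl in Hlt.
    assert (HR : forall z, In z (l1 ++ l2) -> S z).
    { intros z Hz. apply HS. apply in_app_iff in Hz. apply in_app_iff. simpl. tauto. }
    assert (Hsat : forall v, sat v (l1 ++ l2) -> eval v f = true -> False).
    { intros v H1 H2. apply (Hu v). intros z Hz. apply in_app_iff in Hz.
      destruct Hz as [Hz|[Hz|Hz]];
        [apply H1; apply in_app_iff; tauto | subst; exact H2 | apply H1; apply in_app_iff; tauto]. }
    assert (HfS : S f) by (apply HS; apply in_app_iff; simpl; tauto).
    destruct f as [m | g | x y]; [contradiction| |].
    + destruct g as [m | x | x y]; [contradiction| |].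
      * apply (cut_full C HC S x).
        { apply Hn2. transitivity (C (add2 S (Neg x) (Neg (Neg x)))); [apply (ceq C HC); seteq| apply Hn1]. }
        apply (IH (x :: l1 ++ l2)).
        { simpl. rewrite msum_app. simpl in Hlt. lia. }
        { intros v Hv. apply (Hsat v). intros z Hz; apply Hv; simpl; tauto.
          simpl. rewrite (Hv x (or_introl eq_refl)). reflexivity. }
        { intros z [Hz|Hz]. right; unfold sing; auto. left; apply HR, Hz. }
      * apply (cut_full C HC S x).
        { apply Hn2. apply (IH (Neg x :: l1 ++ l2)).
          { simpl. rewrite msum_app. simpl in Hlt. lia. }
          { intros v Hv. apply (Hsat v). intros z Hz; apply Hv; simpl; tauto.
            pose proof (Hv (Neg x) (or_introl eq_refl)) as E. simpl in *.
            destruct (eval v x); simpl in *; congruence. }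
          { intros z [Hz|Hz]. right; unfold sing; auto. left; apply HR, Hz. } }
        apply (cut_full C HC (add1 S x) y).
        { apply Hn2. apply (IH (Neg y :: l1 ++ l2)).
          { simpl. rewrite msum_app. simpl in Hlt. lia. }
          { intros v Hv. apply (Hsat v). intros z Hz; apply Hv; simpl; tauto.
            pose proof (Hv (Neg y) (or_introl eq_refl)) as E. simpl in *.
            destruct (eval v x), (eval v y); simpl in *; congruence. }
          { intros z [Hz|Hz]. right; unfold sing; auto. left; left; apply HR, Hz. } }
        transitivity (C (add2 S x y)); [apply (ceq C HC); seteq|].
        rewrite <- Hand.
        transitivity (C (add2 S (And x y) (Neg (And x y)))); [apply (ceq C HC); seteq| apply Hn1].
    + transitivity (C (add1 S (And x y))); [apply (ceq C HC); seteq|].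
      rewrite Hand.
      apply (IH (x :: y :: l1 ++ l2)).
      { simpl. rewrite msum_app. simpl in Hlt. lia. }
      { intros v Hv. apply (Hsat v). intros z Hz; apply Hv; simpl; tauto.
        simpl. rewrite (Hv x (or_introl eq_refl)), (Hv y (or_intror (or_introl eq_refl))). reflexivity. }
      { intros z [Hz|[Hz|Hz]]; subst. right; left; auto. right; right; auto. left; apply HR, Hz. }
  - destruct (classic (exists m, In (Var m) l /\ In (Neg (Var m)) l)) as [[m [H1 H2]]|Hnp].
    + apply (mono_full C HC (add2 S (Var m) (Neg (Var m)))); [|apply Hn1].
      intros z [Hz|[Hz|Hz]]; [exact Hz| subst; apply HS; auto | subst; apply HS; auto].
    + exfalso. set (v := fun m => if in_dec form_eq_dec (Var m) l then true else false).
      apply (Hu v). intros f Hf.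
      destruct f as [m|g|x y].
      * simpl. unfold v. destruct (in_dec form_eq_dec (Var m) l); congruence.
      * destruct g as [m|x|x y].
        -- simpl. unfold v. destruct (in_dec form_eq_dec (Var m) l); [exfalso; apply Hnp; eauto|reflexivity].
        -- exfalso; apply Hno; exists (Neg (Neg x)); simpl; auto.
        -- exfalso; apply Hno; exists (Neg (And x y)); simpl; auto.
      * exfalso; apply Hno; exists (And x y); simpl; auto.
Qed.

Definition Cfin : Operation := fun A x =>
  exists l, (forall y, In y l -> A y) /\ forall v, sat v l -> eval v x = true.

Lemma extract (A P : fset) l : (forall z, In z l -> A z \/ P z) ->
  exists l', (forall z, In z l' -> A z) /\ forall z, In z l -> In z l' \/ P z.
Proof.
  induction l as [|a l IH]; intros H.
  - exists []. simpl; tauto.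
  - destruct IH as [l' [H1 H2]]. { intros z Hz; apply H; simpl; auto. }
    destruct (H a (or_introl eq_refl)) as [Ha|Ha].
    + exists (a :: l'). split.
      * intros z [Hz|Hz]; [subst; auto| auto].
      * intros z [Hz|Hz]; [subst; left; simpl; auto| destruct (H2 z Hz); [left; simpl; auto| auto]].
    + exists l'. split; auto. intros z [Hz|Hz]; [subst; auto| auto].
Qed.

Lemma collect A l : (forall y, In y l -> Cfin A y) ->
  exists l', (forall z, In z l' -> A z) /\ forall v, sat v l' -> sat v l.
Proof.
  induction l as [|a l IH]; intros H.
  - exists []. split; [simpl; tauto|]. intros v _ f [].
  - destruct IH as [l' [H1 H2]]. { intros; apply H; simpl; auto. }
    destruct (H a (or_introl eq_refl)) as [la [H3 H4]].
    exists (la ++ l'). split.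
    + intros z Hz; apply in_app_iff in Hz; destruct Hz; auto.
    + intros v Hv f [Hf|Hf].
      * subst. apply H4. intros z Hz; apply Hv, in_app_iff; auto.
      * apply (H2 v); auto. intros z Hz; apply Hv, in_app_iff; auto.
Qed.

Lemma Cfin_I : classI Cfin.
Proof.
  repeat split.
  - intros A x Hx. exists [x]. split.
    + intros y [Hy|[]]; subst; auto.
    + intros v Hv; apply Hv; left; auto.
  - intros A. apply fset_ext; intros x; split.
    + intros [l [H1 H2]]. destruct (collect A l H1) as [l' [H3 H4]].
      exists l'. split; auto.
    + intros Hx. exists [x]. split.
      * intros y [Hy|[]]; subst; auto.
      * intros v Hv; apply Hv; left; auto.
  - intros A B HAB x [l [H1 H2]]. exists l; split; auto.
  - intros A H.
    assert (Hc : Cfin A (And (Var 0) (Neg (Var 0)))) by (rewrite H; exact I).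
    destruct Hc as [l [H1 H2]].
    exists (fun x => In x l). split; [exists l; tauto|]. split; [exact H1|].
    apply fset_ext; intros x; split; intros _; [exact I|].
    exists l. split; auto. intros v Hv. exfalso. specialize (H2 v Hv). simpl in H2.
    destruct (v 0); discriminate.
  - intros A a b. apply fset_ext; intros x; split.
    + intros [l [H1 H2]]. destruct (extract A (sing (And a b)) l H1) as [l' [H3 H4]].
      exists (a :: b :: l'). split.
      * intros z [Hz|[Hz|Hz]]; subst. right; left; auto. right; right; auto. left; auto.
      * intros v Hv. apply H2. intros z Hz. destruct (H4 z Hz) as [Hz'|Hz'].
        apply Hv; simpl; auto. unfold sing in Hz'; subst. simpl.
        rewrite (Hv a), (Hv b); simpl; auto.
    + intros [l [H1 H2]]. destruct (extract A (pair a b) l H1) as [l' [H3 H4]].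
      exists (And a b :: l'). split.
      * intros z [Hz|Hz]; subst. right; reflexivity. left; auto.
      * intros v Hv. apply H2. intros z Hz.
        pose proof (Hv (And a b) (or_introl eq_refl)) as E. simpl in E.
        apply Bool.andb_true_iff in E. destruct E as [Ea Eb].
        destruct (H4 z Hz) as [Hz'|[Hz'|Hz']]; subst; auto.
        apply Hv; simpl; auto.
  - intros A a. apply fset_ext; intros x; split; intros _; [exact I|].
    exists [a; Neg a]. split.
    + intros y [H|[H|[]]]; subst; right; unfold pair; auto.
    + intros v Hv. exfalso. pose proof (Hv a (or_introl eq_refl)) as E1.
      pose proof (Hv (Neg a) (or_intror (or_introl eq_refl))) as E2. simpl in E2.
      rewrite E1 in E2; discriminate.
  - intros A a H.
    assert (Hc : Cfin (add1 A (Neg a)) a) by (rewrite H; exact I).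
    destruct Hc as [l [H1 H2]].
    destruct (extract A (sing (Neg a)) l H1) as [l' [H3 H4]].
    exists l'. split; auto. intros v Hv. destruct (eval v a) eqn:E; auto.
    rewrite <- E. apply H2. intros z Hz. destruct (H4 z Hz) as [Hz'|Hz'].
    apply Hv; auto. unfold sing in Hz'; subst; simpl; rewrite E; auto.
Qed.

Lemma I_II C : classI C -> classII C.
Proof.
  intros (Hinc & Hid & Hmon & Hwc & Hand & Hn1 & Hn2).
  repeat split; auto.
  intros A B H1 H2. apply fset_ext; intros x; split; intros Hx.
  - eapply Hmon; eauto.
  - rewrite <- Hid. eapply Hmon; [exact H2|exact Hx].
Qed.

Lemma soundII C a b : classII C -> entails a b -> forall S, S a -> S (Neg b) -> C S = fullset.
Proof.
  intros HC Hab S Ha Hb.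
  apply (main C HC (Datatypes.S (msum [a; Neg b])) [a; Neg b]); [lia| |].
  - intros v Hv. pose proof (Hv a (or_introl eq_refl)) as E1.
    pose proof (Hv (Neg b) (or_intror (or_introl eq_refl))) as E2. simpl in E2.
    rewrite (Hab v E1) in E2; discriminate.
  - intros x [H|[H|[]]]; subst; auto.
Qed.

Lemma back (a b : form) (S : fset) : (forall z, S z -> z = a \/ z = Neg b) -> Cfin S b -> entails a b.
Proof.
  intros HS [l [H1 H2]] v Ha. destruct (eval v b) eqn:E; auto.
  rewrite <- E. apply H2. intros z Hz. destruct (HS z (H1 z Hz)); subst; simpl; auto.
  rewrite E; auto.
Qed.

Theorem theorem5 (a b : form) :
  (entails a b <-> (forall C : Operation, classI C -> C (sing a) b)) /\
  (entails a b <-> (forall C : Operation, classII C -> C (sing a) b)) /\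
  (entails a b <-> (forall C : Operation, classII C ->
                      forall A : fset, C (add1 A a) b)) /\
  (entails a b <-> (forall C : Operation, classII C ->
                      C (pair a (Neg b)) = fullset)).
Proof.
  assert (K : forall C, classII C -> entails a b -> C (sing a) b).
  { intros C HC Hab. pose proof HC as (_ & _ & _ & _ & _ & Hn2). apply Hn2.
    apply (soundII C a b HC Hab); unfold add1, union, sing; [left; reflexivity| right; reflexivity]. }
  split; [|split; [|split]]; split.
  - intros Hab C HC. apply K; auto. apply I_II; auto.
  - intros H. apply (back a b (sing a)); [intros z Hz; left; exact Hz|]. apply H, Cfin_I.
  - intros Hab C HC. apply K; auto.
  - intros H. apply (back a b (sing a)); [intros z Hz; left; exact Hz|]. apply H, I_II, Cfin_I.
  - intros Hab C HC A. pose proof HC as (_ & _ & _ & _ & _ & Hn2). apply Hn2.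
    apply (soundII C a b HC Hab); unfold add1, union, sing; [left; right; reflexivity| right; reflexivity].
  - intros H. apply (back a b (add1 (fun _ => False) a)).
    + intros z [[]|Hz]; left; exact Hz.
    + apply H, I_II, Cfin_I.
  - intros Hab C HC. apply (soundII C a b HC Hab); unfold pair; auto.
  - intros H. apply (back a b (pair a (Neg b))); [intros z Hz; exact Hz|].
    rewrite (H Cfin (I_II _ Cfin_I)). exact I.
Qed.
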